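(* Let $f_1,f_2,f_3$ be smooth nowhere-vanishing functions on $\mathbb R^3$, $g=\frac{1}{f_1^2}dx^1\otimes dx^1+\frac{1}{f_2^2}dx^2\otimes dx^2+\frac{1}{f_3^2}dx^3\otimes dx^3$, $E_i=f_i\frac{\partial}{\partial x^i}$, and let $V_1=\sum_{i=1}^3V_1^iE_i$, $V_2=\sum_{i=1}^3V_2^iE_i$ with smooth components. (i) If $f_i$ and $V_k^i$ depend only on $x^1$ for all $i\in\{1,2,3\}$, $k\in\{1,2\}$, and $V_1,V_2$ are Killing vector fields, then $V_1^1=V_2^1+\tilde c_1$ and $V_1^i=V_2^i+\tilde c_i+\frac{c_i}{f_i}$ for $i\in\{2,3\}$, for some constants $c_2,c_3,\tilde c_1,\tilde c_2,\tilde c_3\in\mathbb R$. (ii) If $f_i$ and $V_k^i$ depend only on $x^i$ for all $i\in\{1,2,3\}$, $k\in\{1,2\}$, and $V_1,V_2$ are Killing vector fields, then $V_1^i=V_2^i+c_i$ for some constants $c_i\in\mathbb R$, $i\in\{1,2,3\}$.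
   Context: $x^1,x^2,x^3$ are the standard coordinates on $\mathbb R^3$. A vector field $V$ is Killing if $\mathcal L_Vg=0$. *)

(* Defs.v *)
From Stdlib Require Import Reals.
From Coquelicot Require Import Coquelicot.
Open Scope R_scope.

Inductive idx : Type := I1 | I2 | I3.

Definition fn3 := R -> R -> R -> R.

Definition sum3 (h : idx -> R) : R := h I1 + h I2 + h I3.

Definition partial (i : idx) (F : fn3) : fn3 :=
  fun x y z => match i with
  | I1 => Derive (fun t => F t y z) x
  | I2 => Derive (fun t => F x t z) y
  | I3 => Derive (fun t => F x y t) z
  end.

Definition ex_partial (i : idx) (F : fn3) : Prop :=
  forall x y z, match i with
  | I1 => ex_derive (fun t => F t y z) x
  | I2 => ex_derive (fun t => F x t z) y
  | I3 => ex_derive (fun t => F x y t) z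
  end.

Definition uncurry3 (F : fn3) : R * R * R -> R :=
  fun p => F (fst (fst p)) (snd (fst p)) (snd p).

Fixpoint Ck (k : nat) (F : fn3) : Prop :=
  match k with
  | O => forall p : R * R * R, continuous (uncurry3 F) p
  | S k' => (forall p : R * R * R, continuous (uncurry3 F) p) /\
            forall i, ex_partial i F /\ Ck k' (partial i F)
  end.

Definition smooth (F : fn3) : Prop := forall k, Ck k F.

(* Vector fields (coordinate components X^k, X = sum X^k d/dx^k) and
   (0,2)-tensor fields (components g_ij). *)
Definition vfield := idx -> fn3.
Definition tensor2 := idx -> idx -> fn3.

Definition lie_deriv (X : vfield) (g : tensor2) : tensor2 :=
  fun i j x y z =>
    sum3 (fun k => X k x y z * partial k (g i j) x y z
                   + g k j x y z * partial i (X k) x y z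
                   + g i k x y z * partial j (X k) x y z).

Definition Killing (X : vfield) (g : tensor2) : Prop :=
  forall i j x y z, lie_deriv X g i j x y z = 0.

Definition idx_eqb (i j : idx) : bool :=
  match i, j with I1, I1 | I2, I2 | I3, I3 => true | _, _ => false end.

Definition diag_metric (f : idx -> fn3) : tensor2 :=
  fun i j x y z => if idx_eqb i j then 1 / (f i x y z) ^ 2 else 0.

(* V = sum_i V^i E_i with E_i = f_i d/dx^i; coordinate components V^i f_i. *)
Definition frame_field (f : idx -> fn3) (V : idx -> fn3) : vfield :=
  fun i x y z => V i x y z * f i x y z.

Definition depends_only_on (j : idx) (F : fn3) : Prop :=
  forall x y z x' y' z',
    match j with
    | I1 => F x y z = F x y' z'
    | I2 => F x y z = F x' y z'
    | I3 => F x y z = F x' y' z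
    end.

(* Main.v *)
Require Import Defs.
From Stdlib Require Import Reals Lra ssreflect.
From Coquelicot Require Import Coquelicot.
Open Scope R_scope.

Lemma Derive_cf (F : R -> R) (a : R) : (forall t, F t = F a) -> Derive F a = 0.
Proof. intro H. rewrite (Derive_ext F (fun _ => F a) a H). apply Derive_const. Qed.

Lemma const_of_D0 (U : R -> R) : (forall t, ex_derive U t) ->
  (forall t, Derive U t = 0) -> forall t a, U t = U a.
Proof.
  intros Hd H0 t a.
  destruct (MVT_gen U a t (Derive U)) as [c [_ Hc]].
  - intros x _. apply Derive_correct, Hd.
  - intros x _. apply continuity_pt_filterlim. apply: ex_derive_continuous; apply Hd.
  - rewrite H0 in Hc. lra.
Qed.

Lemma diag_core (U F : R -> R) : (forall t, ex_derive U t) -> (forall t, ex_derive F t) ->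
  (forall t, F t <> 0) ->
  (forall t, U t * F t * Derive (fun s => 1 / F s ^ 2) t
     + 1 / F t ^ 2 * Derive (fun s => U s * F s) t
     + 1 / F t ^ 2 * Derive (fun s => U s * F s) t = 0) -> forall t a, U t = U a.
Proof.
  intros HU HF Hn H. apply const_of_D0; auto. intro t.
  specialize (H t). specialize (Hn t).
  assert (E1 : Derive (fun s => 1 / F s ^ 2) t = - 2 * Derive F t / F t ^ 3).
  { apply is_derive_unique. auto_derive.
    - split; [apply HF|]. split; [|exact I]. intro Hz. apply Hn. rewrite Rmult_1_r in Hz. apply Rmult_integral in Hz. destruct Hz; auto.
    - change (fun x => F x) with F. field; auto. }
  rewrite E1 (Derive_mult U F t (HU t) (HF t)) in H.
  assert (E : 2 * Derive U t / F t = 0).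
  { rewrite <- H. field. auto. }
  assert (Hi : / F t <> 0) by (apply Rinv_neq_0_compat; auto).
  unfold Rdiv in E. apply Rmult_integral in E. destruct E as [E|E]; [|contradiction].
  lra.
Qed.

Lemma offd_core (W : R -> R) (c : R -> R) : (forall t, ex_derive W t) -> (forall t, c t <> 0) ->
  (forall t, c t * Derive W t = 0) -> forall t a, W t = W a.
Proof.
  intros HW Hc H. apply const_of_D0; auto. intro t. specialize (H t).
  apply Rmult_integral in H. destruct H as [H|H]; [exfalso; exact (Hc t H)|auto].
Qed.
Lemma sm_ex i F : smooth F -> ex_partial i F.
Proof. intro H. destruct (H 1%nat) as [_ H']. exact (proj1 (H' i)). Qed.

Lemma inv2_nz (a : R) : a <> 0 -> 1 / a ^ 2 <> 0.
Proof. intro Ha. unfold Rdiv. rewrite Rmult_1_l. apply Rinv_neq_0_compat, pow_nonzero, Ha. Qed.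


Lemma part_i_V (f V : idx -> fn3) :
    (forall i, smooth (f i)) -> (forall i x y z, f i x y z <> 0) ->
    (forall i, smooth (V i)) ->
    (forall i, depends_only_on I1 (f i) /\ depends_only_on I1 (V i)) ->
    Killing (frame_field f V) (diag_metric f) ->
    exists a1 a2 a3 : R, forall x y z,
      V I1 x y z = a1 /\ V I2 x y z * f I2 x y z = a2 /\ V I3 x y z * f I3 x y z = a3.
Proof.
  intros Hf Hn HV Hd HK.
  destruct (Hd I1) as [df1 dv1]. destruct (Hd I2) as [df2 dv2]. destruct (Hd I3) as [df3 dv3].
  exists (V I1 0 0 0), (V I2 0 0 0 * f I2 0 0 0), (V I3 0 0 0 * f I3 0 0 0).
  intros x y z. split; [|split].
  - rewrite (dv1 x y z x 0 0).
    apply (diag_core (fun t => V I1 t 0 0) (fun t => f I1 t 0 0)).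
    + intro t. exact (sm_ex I1 _ (HV I1) t 0 0).
    + intro t. exact (sm_ex I1 _ (Hf I1) t 0 0).
    + intro t. apply Hn.
    + intro t. cbv beta. have K := HK I1 I1 t 0 0.
      cbv beta iota delta [lie_deriv sum3 diag_metric frame_field partial idx_eqb] in K.
      have E2 : Derive (fun s => 1 / f I1 t s 0 ^ 2) 0 = 0.
      { apply Derive_cf; intro s; cbv beta. by rewrite (df1 t s 0 t 0 0). }
      have E3 : Derive (fun s => 1 / f I1 t 0 s ^ 2) 0 = 0.
      { apply Derive_cf; intro s; cbv beta. by rewrite (df1 t 0 s t 0 0). }
      rewrite E2 E3 in K. etransitivity; [idtac|exact K]. ring.
  - rewrite (dv2 x y z x 0 0) (df2 x y z x 0 0).
    apply (offd_core (fun t => V I2 t 0 0 * f I2 t 0 0) (fun t => 1 / f I2 t 0 0 ^ 2)).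
    + intro t. apply ex_derive_mult; [exact (sm_ex I1 _ (HV I2) t 0 0)|exact (sm_ex I1 _ (Hf I2) t 0 0)].
    + intro t. apply inv2_nz, Hn.
    + intro t. cbv beta. have K := HK I1 I2 t 0 0.
      cbv beta iota delta [lie_deriv sum3 diag_metric frame_field partial idx_eqb] in K.
      have E2 : Derive (fun s => V I1 t s 0 * f I1 t s 0) 0 = 0.
      { apply Derive_cf; intro s; cbv beta. by rewrite (df1 t s 0 t 0 0) (dv1 t s 0 t 0 0). }
      rewrite E2 !Derive_const in K. etransitivity; [idtac|exact K]. ring.
  - rewrite (dv3 x y z x 0 0) (df3 x y z x 0 0).
    apply (offd_core (fun t => V I3 t 0 0 * f I3 t 0 0) (fun t => 1 / f I3 t 0 0 ^ 2)).
    + intro t. apply ex_derive_mult; [exact (sm_ex I1 _ (HV I3) t 0 0)|exact (sm_ex I1 _ (Hf I3) t 0 0)].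
    + intro t. apply inv2_nz, Hn.
    + intro t. cbv beta. have K := HK I1 I3 t 0 0.
      cbv beta iota delta [lie_deriv sum3 diag_metric frame_field partial idx_eqb] in K.
      have E2 : Derive (fun s => V I1 t 0 s * f I1 t 0 s) 0 = 0.
      { apply Derive_cf; intro s; cbv beta. by rewrite (df1 t 0 s t 0 0) (dv1 t 0 s t 0 0). }
      rewrite E2 !Derive_const in K. etransitivity; [idtac|exact K]. ring.
Qed.

Lemma part_ii_V (f V : idx -> fn3) :
    (forall i, smooth (f i)) -> (forall i x y z, f i x y z <> 0) ->
    (forall i, smooth (V i)) ->
    (forall i, depends_only_on i (f i) /\ depends_only_on i (V i)) ->
    Killing (frame_field f V) (diag_metric f) ->
    forall i x y z, V i x y z = V i 0 0 0.
Proof.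
  intros Hf Hn HV Hd HK.
  destruct (Hd I1) as [df1 dv1]. destruct (Hd I2) as [df2 dv2]. destruct (Hd I3) as [df3 dv3].
  intros i x y z. destruct i.
  - rewrite (dv1 x y z x 0 0).
    apply (diag_core (fun t => V I1 t 0 0) (fun t => f I1 t 0 0)).
    + intro t. exact (sm_ex I1 _ (HV I1) t 0 0).
    + intro t. exact (sm_ex I1 _ (Hf I1) t 0 0).
    + intro t. apply Hn.
    + intro t. cbv beta. have K := HK I1 I1 t 0 0.
      cbv beta iota delta [lie_deriv sum3 diag_metric frame_field partial idx_eqb] in K.
      have E2 : Derive (fun s => 1 / f I1 t s 0 ^ 2) 0 = 0.
      { apply Derive_cf; intro s; cbv beta. by rewrite (df1 t s 0 t 0 0). }
      have E3 : Derive (fun s => 1 / f I1 t 0 s ^ 2) 0 = 0.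
      { apply Derive_cf; intro s; cbv beta. by rewrite (df1 t 0 s t 0 0). }
      rewrite E2 E3 in K. etransitivity; [idtac|exact K]. ring.
  - rewrite (dv2 x y z 0 y 0).
    apply (diag_core (fun t => V I2 0 t 0) (fun t => f I2 0 t 0)).
    + intro t. exact (sm_ex I2 _ (HV I2) 0 t 0).
    + intro t. exact (sm_ex I2 _ (Hf I2) 0 t 0).
    + intro t. apply Hn.
    + intro t. cbv beta. have K := HK I2 I2 0 t 0.
      cbv beta iota delta [lie_deriv sum3 diag_metric frame_field partial idx_eqb] in K.
      have E2 : Derive (fun s => 1 / f I2 s t 0 ^ 2) 0 = 0.
      { apply Derive_cf; intro s; cbv beta. by rewrite (df2 s t 0 0 t 0). }
      have E3 : Derive (fun s => 1 / f I2 0 t s ^ 2) 0 = 0.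
      { apply Derive_cf; intro s; cbv beta. by rewrite (df2 0 t s 0 t 0). }
      rewrite E2 E3 in K. etransitivity; [idtac|exact K]. ring.
  - rewrite (dv3 x y z 0 0 z).
    apply (diag_core (fun t => V I3 0 0 t) (fun t => f I3 0 0 t)).
    + intro t. exact (sm_ex I3 _ (HV I3) 0 0 t).
    + intro t. exact (sm_ex I3 _ (Hf I3) 0 0 t).
    + intro t. apply Hn.
    + intro t. cbv beta. have K := HK I3 I3 0 0 t.
      cbv beta iota delta [lie_deriv sum3 diag_metric frame_field partial idx_eqb] in K.
      have E2 : Derive (fun s => 1 / f I3 s 0 t ^ 2) 0 = 0.
      { apply Derive_cf; intro s; cbv beta. by rewrite (df3 s 0 t 0 0 t). }
      have E3 : Derive (fun s => 1 / f I3 0 s t ^ 2) 0 = 0.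
      { apply Derive_cf; intro s; cbv beta. by rewrite (df3 0 s t 0 0 t). }
      rewrite E2 E3 in K. etransitivity; [idtac|exact K]. ring.
Qed.

Theorem mainTheorem9 :
  forall (f V1 V2 : idx -> fn3),
    (forall i, smooth (f i)) ->
    (forall i x y z, f i x y z <> 0) ->
    (forall i, smooth (V1 i)) ->
    (forall i, smooth (V2 i)) ->
    (* (i) *)
    ((forall i, depends_only_on I1 (f i) /\ depends_only_on I1 (V1 i)
                /\ depends_only_on I1 (V2 i)) ->
     Killing (frame_field f V1) (diag_metric f) ->
     Killing (frame_field f V2) (diag_metric f) ->
     exists c2 c3 ct1 ct2 ct3 : R,
       forall x y z,
         V1 I1 x y z = V2 I1 x y z + ct1 /\
         V1 I2 x y z = V2 I2 x y z + ct2 + c2 / f I2 x y z /\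
         V1 I3 x y z = V2 I3 x y z + ct3 + c3 / f I3 x y z)
    /\
    (* (ii) *)
    ((forall i, depends_only_on i (f i) /\ depends_only_on i (V1 i)
                /\ depends_only_on i (V2 i)) ->
     Killing (frame_field f V1) (diag_metric f) ->
     Killing (frame_field f V2) (diag_metric f) ->
     exists c : idx -> R,
       forall i x y z, V1 i x y z = V2 i x y z + c i).
Proof.
  intros f V1 V2 Hf Hn H1 H2. split.
  - intros Hd K1 K2.
    destruct (part_i_V f V1 Hf Hn H1 (fun i => conj (proj1 (Hd i)) (proj1 (proj2 (Hd i)))) K1)
      as [a1 [a2 [a3 Ha]]].
    destruct (part_i_V f V2 Hf Hn H2 (fun i => conj (proj1 (Hd i)) (proj2 (proj2 (Hd i)))) K2)
      as [b1 [b2 [b3 Hb]]].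
    exists (a2 - b2), (a3 - b3), (a1 - b1), 0, 0.
    intros x y z. destruct (Ha x y z) as [A1 [A2 A3]]. destruct (Hb x y z) as [B1 [B2 B3]].
    have n2 := Hn I2 x y z. have n3 := Hn I3 x y z.
    split; [|split].
    + rewrite A1 B1. ring.
    + have -> : V1 I2 x y z = a2 / f I2 x y z by rewrite -A2; field.
      have -> : V2 I2 x y z = b2 / f I2 x y z by rewrite -B2; field.
      field. exact n2.
    + have -> : V1 I3 x y z = a3 / f I3 x y z by rewrite -A3; field.
      have -> : V2 I3 x y z = b3 / f I3 x y z by rewrite -B3; field.
      field. exact n3.
  - intros Hd K1 K2.
    have A := part_ii_V f V1 Hf Hn H1 (fun i => conj (proj1 (Hd i)) (proj1 (proj2 (Hd i)))) K1.
    have B := part_ii_V f V2 Hf Hn H2 (fun i => conj (proj1 (Hd i)) (proj2 (proj2 (Hd i)))) K2.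
    exists (fun i => V1 i 0 0 0 - V2 i 0 0 0).
    intros i x y z. rewrite (A i x y z) (B i x y z). ring.
Qed.
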